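(* Let $q\ge 3$ be a prime power, $e\ge 3$, $a\in\mathbb{F}_{q^e}$ with $a\neq 0$, $\ell=q^{e-1}+\cdots+q+1$, and let $r=h(\ell-q^{e-1}-1)+1$ for some integer $1\le h\le q-1$. Let $N=2q^{e-1}-q^{e-2}-1$, for $i\in\mathbb{Z}$ let $A_i=i\ell-\frac{rN}{q-1}$, let $S_N=\{A_i: i\in\mathbb{Z},\ 0\le A_i\le N\}$, and let $j=2hq^{e-3}+h\sum_{i=0}^{e-4}q^i$. Then (i) $A_j=(h-2)q^{e-2}+(2h-1)q^{e-3}+(h-1)\sum_{i=0}^{e-4}q^i$; (ii) $A_{j+1}=q^{e-1}+(h-1)q^{e-2}+2hq^{e-3}+h\sum_{i=0}^{e-4}q^i$; (iii) $S_N=\{A_{j+1}\}$ if $h=1$, $S_N=\{A_j,A_{j+1}\}$ if $2\le h\le q-2$, and $S_N=\{A_j\}$ if $h=q-1$.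
   Context: Empty sums (e.g. $\sum_{i=0}^{e-4}$ when $e=3$) equal $0$. *)

(* Defs.v *)
From HB Require Import structures.
From mathcomp Require Import all_boot all_order all_algebra all_field.
Set Implicit Arguments. Unset Strict Implicit. Unset Printing Implicit Defensive.
Import Order.TTheory GRing.Theory Num.Theory.
Local Open Scope ring_scope.

Definition prime_power (q : nat) : Prop :=
  exists p k : nat, prime p /\ (0 < k)%N /\ q = (p ^ k)%N.

Definition geom (q n : nat) : nat := (\sum_(0 <= i < n) q ^ i)%N.

Definition ell (q e : nat) : nat := geom q e.

Definition rr (q e h : nat) : int :=
  (h%:Z) * ((ell q e)%:Z - (q ^ e.-1)%:Z - 1) + 1.

Definition NN (q e : nat) : int :=
  2 * (q ^ e.-1)%:Z - (q ^ (e - 2))%:Z - 1.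

Definition AA (q e h : nat) (i : int) : rat :=
  i%:~R * (ell q e)%:R - (rr q e h)%:~R * (NN q e)%:~R / ((q%:R : rat) - 1).

Definition inSN (q e h : nat) (x : rat) : Prop :=
  exists i : int, x = AA q e h i /\ 0 <= x /\ x <= (NN q e)%:~R.

Definition jj (q e h : nat) : nat := (2 * h * q ^ (e - 3) + h * geom q (e - 3))%N.

(* Main.v *)
Require Import Defs.
From HB Require Import structures.
From mathcomp Require Import all_boot all_order all_algebra all_field.
From mathcomp Require Import ring lra zify.
Import Order.TTheory GRing.Theory Num.Theory.
Local Open Scope ring_scope.
Lemma alg (Q P G H i : rat) : Q != 1 -> (Q-1)*G = P-1 ->
  let L := Q^+2*P+Q*P+P+G in
  i*L - (H*(L - Q^+2*P - 1)+1)*(2*(Q^+2*P) - Q*P - 1)/(Q-1)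
  = (H-2)*Q*P + (2*H-1)*P + (H-1)*G + (i - (2*H*P+H*G))*L.
Proof.
move=> hQ hG L; rewrite /L.
have -> : P = (Q-1)*G+1 by rewrite hG; ring.
have hQ1 : Q - 1 != 0 by rewrite subr_eq0.
field. exact hQ1.
Qed.
Lemma ineqs (Q P G H : rat) : 3 <= Q -> 1 <= H -> H <= Q - 1 -> (Q-1)*G = P-1 -> 0 <= G -> 1 <= P ->
 let L := Q^+2*P+Q*P+P+G in
 let Aj := (H-2)*Q*P + (2*H-1)*P + (H-1)*G in
 let N := 2*Q^+2*P - Q*P - 1 in
 [/\ Aj - L < 0, Aj + L + L > N, (2 <= H -> 0 <= Aj), (H <= Q - 2 -> Aj + L <= N)
     & [/\ (H = Q - 1 -> Aj + L > N), (H = 1 -> Aj < 0), Aj <= N & 0 <= Aj + L]].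
Proof.
move=> hQ hH1 hH2 hG hG0 hP L Aj N.
have GP : 2 * G <= P - 1.
  have h3 : 0 <= Q - 3 by lra. have := mulr_ge0 h3 hG0. move: hG. rewrite !mulrBl. lra.
have hQP : 3 * P <= Q * P by nra.
split; [| | | |split]; rewrite /Aj /L /N.
- nra.
- nra.
- nra.
- nra.
- nra.
- nra.
- nra.
- nra.
Qed.
Lemma geomS q n : geom q n.+1 = (geom q n + q ^ n)%N.
Proof. by rewrite /geom big_nat_recr. Qed.

Lemma geom_mul q n : ((q%:R - 1) * (geom q n)%:R : rat) = (q%:R)^+n - 1.
Proof.
elim: n => [|n IH]; first by rewrite /geom big_geq // mulr0 expr0 subrr.
by rewrite geomS natrD mulrDr IH natrX exprS; ring.
Qed.

Lemma natzR (n : nat) : ((n%:Z)%:~R : rat) = n%:R.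
Proof. by []. Qed.

Theorem lemma4p4 (q e h : nat) (F : finFieldType) (a : F)
  (Hq : prime_power q) (Hq3 : (3 <= q)%N) (He : (3 <= e)%N)
  (HF : #|F| = (q ^ e)%N) (Ha : a != 0)
  (Hh1 : (1 <= h)%N) (Hh2 : (h <= q - 1)%N) :
  let Aj := (h%:~R - 2) * (q ^ (e - 2))%:R + (2 * h%:~R - 1) * (q ^ (e - 3))%:R
            + (h%:~R - 1) * (geom q (e - 3))%:R : rat in
  let Aj1 := (q ^ e.-1)%:R + (h%:~R - 1) * (q ^ (e - 2))%:R
            + 2 * h%:~R * (q ^ (e - 3))%:R + h%:~R * (geom q (e - 3))%:R : rat in
  [/\ AA q e h (jj q e h)%:Z = Aj,
      AA q e h (jj q e h).+1%:Z = Aj1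
    & forall x : rat,
        inSN q e h x <->
        (if h == 1%N then x = Aj1
         else if h == (q - 1)%N then x = Aj
         else x = Aj \/ x = Aj1)].
Proof.
move: He HF; case: e => [|[|[|n]]] // _ _.
have e3 : (n.+3 - 3 = n)%N by lia.
have e2 : (n.+3 - 2 = n.+1)%N by lia.
have nq1 : (1 <= q)%N by lia.
have nq2 : (2 <= q)%N by lia.
have nA : h = 1%N -> (h <= q - 2)%N by lia.
have nB : h = (q - 1)%N -> (2 <= h)%N by lia.
have nC : h <> 1%N -> h <> (q - 1)%N -> (2 <= h)%N /\ (h <= q - 2)%N by lia.
rewrite /= e3 e2.
set Q : rat := q%:R.
set G : rat := (geom q n)%:R.
have hP1 : (q ^ n.+1)%:R = Q * Q^+n by rewrite natrX exprS.
have hP2 : (q ^ n.+2)%:R = Q^+2 * Q^+n by rewrite natrX !exprS expr0 mulr1 mulrA.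
have hP0 : (q ^ n)%:R = Q^+n by rewrite natrX.
have hL : (ell q n.+3)%:R = Q^+2 * Q^+n + Q * Q^+n + Q^+n + G.
  by rewrite /ell !geomS !natrD hP1 hP2 hP0 -/G; ring.
have hj : (jj q n.+3 h)%:R = 2 * h%:R * Q^+n + h%:R * G.
  by rewrite /jj e3 !natrD !natrM hP0.
have hAA : forall i : int, AA q n.+3 h i =
   (h%:R-2)*Q*Q^+n + (2*h%:R-1)*Q^+n + (h%:R-1)*G + (i%:~R - (2*h%:R*Q^+n+h%:R*G))*(Q^+2 * Q^+n + Q * Q^+n + Q^+n + G).
  move=> i; rewrite /AA /rr /NN.
  have e1 : (n.+3.-1 = n.+2)%N by [].
  rewrite e1 e2 !(intrD, intrB, intrM, intrN) !natzR hL hP2 hP1 -/Q.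
  have -> : (1 + 1 : rat) = 2 by [].
  have hQ1 : Q != 1.
    by rewrite /Q pnatr_eq1; apply/eqP; lia.
  have := alg Q (Q ^+ n) G h%:R i%:~R hQ1 (geom_mul q n). by move=> /= ->.
have hN : (NN q n.+3)%:~R = 2 * (Q^+2 * Q^+n) - Q * Q^+n - 1.
  rewrite /NN.
  have e1 : (n.+3.-1 = n.+2)%N by [].
  by rewrite e1 e2 !(intrD, intrB, intrM, intrN) !natzR hP2 hP1.
have hQ3 : 3 <= Q by rewrite /Q (ler_nat _ 3).
have hH1 : 1 <= (h%:R : rat) by rewrite (ler_nat _ 1).
have hH2 : (h%:R : rat) <= Q - 1.
  have -> : Q - 1 = (q - 1)%:R by rewrite natrB //; lia.
  by rewrite ler_nat.
have hG := geom_mul q n. rewrite -/Q -/G in hG.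
have hG0 : 0 <= G by [].
have hPge : 1 <= Q ^+ n by apply: exprn_ege1; lra.
have [i1 i2 i3 i4 [i5 i6 i7 i8]] := ineqs Q (Q ^+ n) G h%:R hQ3 hH1 hH2 hG hG0 hPge.
rewrite !natzR hP1 hP2 hP0.
have g1 : AA q n.+3 h (jj q n.+3 h) =
  (h%:R - 2) * (Q * Q ^+ n) + (2 * h%:R - 1) * Q ^+ n + (h%:R - 1) * G.
  by rewrite hAA natzR hj; ring.
have g2 : AA q n.+3 h (jj q n.+3 h).+1 =
  Q ^+ 2 * Q ^+ n + (h%:R - 1) * (Q * Q ^+ n) + 2 * h%:R * Q ^+ n + h%:R * G.
  by rewrite hAA natzR -(natr1 (jj q n.+3 h)) hj; ring.
split => // x.
rewrite -g1 -g2.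
set P := Q ^+ n in i1 i2 i3 i4 i5 i6 i7 i8 hAA hN hPge hG g1 g2 hj *.
split.
- case=> i [xE [x0 xN]].
  rewrite hN in xN.
  set k := i - (jj q n.+3 h)%:Z.
  have hi : (i%:~R : rat) = (jj q n.+3 h)%:R + k%:~R by rewrite /k intrB natzR; ring.
  clearbody k.
  set L := Q ^+ 2 * P + Q * P + P + G.
  set A0 := (h%:R - 2) * (Q * P) + (2 * h%:R - 1) * P + (h%:R - 1) * G.
  have hx : x = A0 + k%:~R * L by rewrite xE hAA hi hj /A0 /L; ring.
  have L0 : 0 <= L by rewrite /L; lra.
  clear hi; move: hx; case: k => [[|[|m]]|m] hx.
  + rewrite (_ : (Posz 0)%:~R = 0 :> rat) // mul0r addr0 in hx.
    rewrite g1 -/A0 -hx.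
    case: ifP => [/eqP h1|_]; first by exfalso; have := i6 (congr1 (fun m => m%:R) h1); rewrite hx /A0 in x0; lra.
    by case: ifP => _; [|left].
  + rewrite (_ : (Posz 1)%:~R = 1 :> rat) // mul1r in hx.
    have -> : AA q n.+3 h (jj q n.+3 h).+1 = x by rewrite g2 hx /A0 /L; ring.
    case: ifP => _ //.
    case: ifP => [/eqP hq1|_]; last by right.
    exfalso.
    have hq1' : (h%:R : rat) = Q - 1 by rewrite hq1 natrB.
    have := i5 hq1'. rewrite -/L. rewrite hx /A0 in xN. lra.
  + exfalso.
    rewrite natzR in hx.
    have kk : 0 <= (m.+2%:R : rat) - 2 by rewrite -natr1 -natr1; have : 0 <= (m%:R : rat) by []; lra.
    have := mulr_ge0 kk L0. move: i2; rewrite -/L => i2'.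
    rewrite hx in xN. rewrite /A0 in xN. lra.
  + exfalso.
    rewrite NegzE intrN natzR in hx.
    have kk : 0 <= (m.+1%:R : rat) - 1 by rewrite -natr1; have : 0 <= (m%:R : rat) by []; lra.
    have := mulr_ge0 kk L0. move: i1; rewrite -/L => i1'.
    rewrite hx in x0. rewrite /A0 in x0. lra.
- have W1 : inSN q n.+3 h (AA q n.+3 h (jj q n.+3 h)) ->
            inSN q n.+3 h (AA q n.+3 h (jj q n.+3 h)) by [].
  have S1 : (2 <= h)%N -> inSN q n.+3 h (AA q n.+3 h (jj q n.+3 h)).
    move=> h2; exists (jj q n.+3 h); split => //.
    rewrite hN g1. have h2' : 2 <= (h%:R : rat) by rewrite (ler_nat _ 2).
    split; [have := i3 h2'|]; lra.
  have S2 : (h <= q - 2)%N -> inSN q n.+3 h (AA q n.+3 h (jj q n.+3 h).+1).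
    move=> h2; exists (jj q n.+3 h).+1; split => //.
    rewrite hN g2. have h2' : (h%:R : rat) <= Q - 2.
      have -> : Q - 2 = (q - 2)%:R by rewrite natrB.
      by rewrite ler_nat.
    split; [|have := i4 h2']; lra.
  case: ifP => [/eqP h1 ->|/eqP h1].
    exact: S2 (nA h1).
  case: ifP => [/eqP hq1 ->|/eqP hq1].
    exact: S1 (nB hq1).
  have [c1 c2] := nC h1 hq1.
  case=> ->; [exact: S1 | exact: S2].
Qed.
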